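(* Let $X$ be a strictly convex complex Banach space and let $J:X\to X^*$ be any duality section of $X$. Let $x\in X$ be a unit vector and let $T=\{e^{tA}:t\ge 0\}$ be a $(C_0)$ contraction semigroup with generator $A$ such that \[\lim_{t\to\infty}|\langle T(t)x,J(x)\rangle| = 1.\] Then $x$ is in the domain of $A$ and $Ax=i\lambda x$ for some real number $\lambda$; i.e. $x$ is an eigenvector of $A$ corresponding to a purely imaginary eigenvalue.
   Context: For a complex Banach space $X$, a functional $x^*\in X^*$ is called dual to $x\in X$ if $\langle x,x^*\rangle = \|x^*\|\|x\| = \|x^*\|^2=\|x\|^2$. A map $J:X\to X^*$ is a duality section if $J(x)$ is dual to $x$ for every $x\in X$. $X$ is strictly convex if for any two unit vectors $x,y$, either $x=y$ or $\|x+y\|<2$. *)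

(* Defs.v *)
(* A complex Banach space is X : completeNormedModType R[i]; its norm `|x| takes values
   in R[i] (real, nonnegative values), as is standard for normedModType over R[i]. *)
From HB Require Import structures.
From mathcomp Require Import all_boot all_order all_algebra.
From mathcomp Require Import all_classical all_reals all_analysis.
From mathcomp Require Import complex.
Set Implicit Arguments. Unset Strict Implicit. Unset Printing Implicit Defensive.
Import Order.TTheory GRing.Theory Num.Theory.
Import numFieldNormedType.Exports.
Local Open Scope ring_scope.
Local Open Scope complex_scope.
Local Open Scope classical_set_scope.

(* Equip the complex numbers R[i] with their standard (norm) topology,
   as mathcomp-analysis does for any numFieldType via R^o. *)
HB.instance Definition _ (R : realType) := NormedModule.copy R[i] R[i]^o.

Section Defs.
Variables (R : realType) (X : completeNormedModType R[i]).

Definition strictly_convex : Prop :=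
  forall x y : X, `|x| = 1 -> `|y| = 1 -> x = y \/ `|x + y| < 2.

Definition in_dual (f : X -> R[i]) : Prop :=
  (forall (a : R[i]) (u v : X), f (a *: u + v) = a * f u + f v) /\ continuous f.

Definition dual_norm_is (f : X -> R[i]) (c : R[i]) : Prop :=
  0 <= c /\ (forall y, `|f y| <= c * `|y|) /\
  (forall c', 0 <= c' -> (forall y, `|f y| <= c' * `|y|) -> c <= c').

Definition dual_to (x : X) (xs : X -> R[i]) : Prop :=
  in_dual xs /\ exists c, dual_norm_is xs c /\
    xs x = c * `|x| /\ c * `|x| = c ^+ 2 /\ c ^+ 2 = `|x| ^+ 2.

Definition duality_section (J : X -> X -> R[i]) : Prop :=
  forall x, dual_to x (J x).

Definition C0_contraction_semigroup (T : R -> X -> X) : Prop :=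
  [/\ (forall t, 0 <= t -> forall (a : R[i]) (u v : X), T t (a *: u + v) = a *: T t u + T t v),
      (forall y, T 0 y = y),
      (forall s t, 0 <= s -> 0 <= t -> forall y, T (s + t) y = T s (T t y)),
      (forall y, T t y @[t --> 0^'+] --> y) &
      (forall t, 0 <= t -> forall y, `|T t y| <= `|y|)].

Definition generator (T : R -> X -> X) (x y : X) : Prop :=
  (h^-1)%:C *: (T h x - x) @[h --> 0^'+] --> y.

Definition generator_domain (T : R -> X -> X) (x : X) : Prop :=
  exists y, generator T x y.

End Defs.

(* Main.v *)
Set Warnings "-all".
Require Import Defs.
From HB Require Import structures.
From mathcomp Require Import all_boot all_order all_algebra.
From mathcomp Require Import all_classical all_reals all_analysis.
From mathcomp Require Import complex.
From mathcomp Require Import ring lra.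
Import Order.TTheory GRing.Theory Num.Theory.
Import numFieldNormedType.Exports.
Local Open Scope ring_scope.
Local Open Scope complex_scope.
Local Open Scope classical_set_scope.
Lemma normR (R : realType) (V : normedModType R[i]) (y : V) : `|y| = (complex.Re `|y|)%:C.
Proof. by rewrite RRe_real // normr_real. Qed.

Lemma normC_real (R : realType) (k : R) : `|k%:C| = `|k|%:C.
Proof. by rewrite normc_def /= expr0n addr0 sqrtr_sqr. Qed.

Lemma Re_le_norm (R : realType) (z : R[i]) : (`|complex.Re z|)%:C <= `|z|.
Proof.
rewrite normc_def lecR -sqrtr_sqr; apply: ler_wsqrtr; rewrite lerDl sqr_ge0 //.
Qed.

Lemma Im_le_norm (R : realType) (z : R[i]) : (`|complex.Im z|)%:C <= `|z|.
Proof.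
rewrite normc_def lecR -sqrtr_sqr; apply: ler_wsqrtr; rewrite lerDr sqr_ge0 //.
Qed.

Lemma norm_le_ReIm (R : realType) (z : R[i]) : `|z| <= (`|complex.Re z| + `|complex.Im z|)%:C.
Proof.
rewrite [X in `|X|]complexE rmorphD /=.
apply: (le_trans (ler_normD _ _)); apply: lerD; first by rewrite normC_real.
by rewrite normrM normC_real normc_def /= expr0n add0r expr1n sqrtr1 mul1r.
Qed.

Lemma ReIm_sq (R : realType) (z : R[i]) : `|z| = 1 -> (complex.Re z)^+2 + (complex.Im z)^+2 = 1.
Proof.
move=> h; apply: (@complexI R); rewrite add_Re2_Im2 h expr1n //.
Qed.

Lemma ImM (R : realType) (z w : R[i]) : complex.Im (z * w) = complex.Re z * complex.Im w + complex.Im z * complex.Re w.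
Proof. by case: z => a b; case: w => c d /=. Qed.

Lemma lip (R : realType) (X : normedModType R[i]) (x a : X) (b c : R[i]) :
  `|a| = 1 -> `| `|x + b *: a| - `|x + c *: a| | <= `|b - c|.
Proof.
move=> a1; apply: le_trans (ler_dist_dist _ _) _.
by rewrite opprD addrA [x + _ - x]addrC addrA addNr add0r -scalerBl normrZ a1 mulr1.
Qed.

Lemma normR_dist (R : realType) (X : normedModType R[i]) (u w : X) :
  (`|complex.Re `|u| - complex.Re `|w| |)%:C = `| `|u| - `|w| |.
Proof. by rewrite -normC_real rmorphB /= -!normR. Qed.

Definition Bc (R : realType) (s t : R) : R[i] := t +i* (s * Num.sqrt (1 - t ^+ 2)).
Arguments Bc {R}.

Lemma cont_h (R : realType) (s : R) : continuous (fun t : R => s * Num.sqrt (1 - t ^+ 2)).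
Proof.
move=> t; apply: cvgM; first exact: cvg_cst.
apply: (continuous_comp (f := fun t : R => 1 - t ^+ 2)); last exact: sqrt_continuous.
apply: cvgB; first exact: cvg_cst.
exact: exprn_continuous.
Qed.

Lemma cont_f (R : realType) (X : normedModType R[i]) (x a : X) (s : R) :
  `|a| = 1 -> continuous (fun t => complex.Re `|x + Bc s t *: a|).
Proof.
move=> a1 t0; apply/cvgrPdist_lt => e e0.
have e20 : 0 < e / 2 by lra.
near=> t.
have H1 : `|t0 - t| < e / 2.
  near: t; apply: (@cvgr_dist_lt _ _ _ (nbhs t0) _ (fun t => t) t0) => //; exact: cvg_id.
have H2 : `|s * Num.sqrt (1 - t0 ^+ 2) - s * Num.sqrt (1 - t ^+ 2)| < e / 2.
  near: t; apply: (@cvgr_dist_lt _ _ _ (nbhs t0) _ (fun t => s * Num.sqrt (1 - t^+2)) (s * Num.sqrt (1 - t0^+2))) => //.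
  exact: cont_h.
suff : (`|complex.Re `|x + Bc s t0 *: a| - complex.Re `|x + Bc s t *: a| |)%:C
   <= (`|t0 - t| + `|s * Num.sqrt (1 - t0 ^+ 2) - s * Num.sqrt (1 - t ^+ 2)|)%:C.
  rewrite lecR; lra.
rewrite normR_dist; apply: le_trans (@lip _ _ x a (Bc s t0) (Bc s t) a1) _.
apply: le_trans (@norm_le_ReIm _ _) _.
by rewrite /Bc /=.
Unshelve. all: by end_near.
Qed.

Lemma Bunit (R : realType) (s t : R) : t \in `[-1, 1]%R -> s ^+ 2 = 1 -> `|Bc s t| = 1.
Proof.
rewrite in_itv /= => /andP[t1 t2] s1.
rewrite normc_def /= exprMn s1 mul1r sqr_sqrtr; last by nra.
by rewrite addrC subrK sqrtr1.
Qed.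

Lemma cover (R : realType) (b : R[i]) : `|b| = 1 ->
  exists s t, [/\ s ^+ 2 = 1, t \in `[-1, 1]%R & b = Bc s t].
Proof.
move=> /ReIm_sq; case: b => u v /= h.
exists (if 0 <= v then 1 else -1), u; split.
- by case: ifP => _; rewrite ?sqrrN expr1n.
- rewrite in_itv /=; apply/andP; split; nra.
- rewrite /Bc; congr (_ +i* _).
  have -> : 1 - u ^+ 2 = v ^+ 2 by lra.
  rewrite sqrtr_sqr; case: ifP => hv; first by rewrite mul1r ger0_norm.
  by rewrite ltr0_norm ?mulN1r ?opprK // ltNge hv.
Qed.

Lemma evt_phase (R : realType) (X : normedModType R[i]) (x a : X) :
  `|a| = 1 ->
  (forall eps : R, 0 < eps -> exists b : R[i], `|b| = 1 /\ 2 - eps <= complex.Re `|x + b *: a|) ->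
  exists b : R[i], `|b| = 1 /\ 2 <= complex.Re `|x + b *: a|.
Proof.
move=> a1 H.
pose f s t := complex.Re `|x + Bc s t *: a|.
have m11 : (-1 : R) <= 1 by lra.
have [m1 m1i Hm1] := EVT_max (f := f 1) m11 (continuous_subspaceT (@cont_f _ _ x a 1 a1)).
have [m2 m2i Hm2] := EVT_max (f := f (-1)) m11 (continuous_subspaceT (@cont_f _ _ x a (-1) a1)).
have ub b : `|b| = 1 -> complex.Re `|x + b *: a| <= Num.max (f 1 m1) (f (-1) m2).
  move=> /cover [s [t [s1 ti ->]]].
  have : s = 1 \/ s = -1.
    by move/eqP: s1; rewrite sqrf_eq1 => /orP[] /eqP; [left|right].
  case=> ->.
  - by apply: le_trans (Hm1 t ti) _; rewrite le_max lexx.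
  - by apply: le_trans (Hm2 t ti) _; rewrite le_max lexx orbT.
have M2 : 2 <= Num.max (f 1 m1) (f (-1) m2).
  rewrite leNgt; apply/negP => hlt.
  have [b [b1 hb]] := H ((2 - Num.max (f 1 m1) (f (-1) m2)) / 2) ltac:(lra).
  have := ub b b1; lra.
move: M2; rewrite le_max => /orP[h|h].
- by exists (Bc 1 m1); split => //; apply: Bunit => //; rewrite expr1n.
- by exists (Bc (-1) m2); split => //; apply: Bunit => //; rewrite sqrrN expr1n.
Qed.
Lemma quot_lim (R : realType) (f : R -> R) (d l : R) :
  is_derive (0:R) (1:R) f d ->
  (fun h => h^-1 * (f (l * h) - f 0)) @ 0^' --> l * d.
Proof.
move=> fd.
have df : differentiable f 0 by apply/derivable1_diffP; exact: ex_derive.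
have dl : derivable f 0 l by apply: diff_derivable.
have E : 'D_l f 0 = l * d.
  rewrite deriveE // -[l in LHS]mulr1 -[(l * 1)]/(l *: (1:R)) linearZ /=.
  by rewrite -deriveE // derive_val.
rewrite -E.
have -> : (fun h => h^-1 * (f (l * h) - f 0)) =
  (fun h => h^-1 *: ((f \o shift 0) (h *: l) - f 0)).
  apply: funext => h /=; rewrite addr0 -[h *: l]/(h * l) -[h^-1 *: _]/(h^-1 * _).
  by rewrite [h * l]mulrC.
apply: cvg_trans dl. exact: cvg_id. Qed.

Lemma additive_lin (R : realType) (f : R -> R) (d M : R) :
  0 < d ->
  (forall a b, 0 <= a -> 0 <= b -> a + b <= d -> f (a + b) = f a + f b) ->
  (forall h, 0 <= h <= d -> `|f h| <= M) ->
  forall h, 0 <= h <= d -> f h = f d / d * h.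
Proof.
move=> d0 fadd fb.
set l := f d / d.
pose e h := f h - l * h.
have eadd a b : 0 <= a -> 0 <= b -> a + b <= d -> e (a+b) = e a + e b.
  by move=> a0 b0 abd; rewrite /e fadd //; ring.
have ed : e d = 0.
  by rewrite /e /l divfK ?subrr // gt_eqF.
set M' := M + `|f d|.
have eb h : 0 <= h <= d -> `|e h| <= M'.
  move=> /andP[h0 hd]; rewrite /e; apply: le_trans (ler_normB _ _) _.
  apply: lerD; first by apply: fb; rewrite h0 hd.
  rewrite normrM /l normrM (gtr0_norm (_ : 0 < d^-1)) ?invr_gt0 // (ger0_norm h0).
  rewrite -mulrA; apply: ler_piMr => //.
  by rewrite mulrC ler_pdivrMr // mul1r.
have e0 : e 0 = 0.
  have := eadd 0 0 (lexx _) (lexx _); rewrite addr0 => /(_ (ltW d0)) H; lra.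
have emul n s : 0 <= s -> n%:R * s <= d -> e (n%:R * s) = n%:R * e s.
  elim: n => [|n IH] s0 nd; first by rewrite !mul0r e0.
  have nd' : n%:R * s <= d.
    apply: le_trans nd; apply: ler_wpM2r => //; rewrite ler_nat //.
  have nd2 : n%:R * s + s <= d by move: nd; rewrite -natr1 mulrDl mul1r.
  rewrite -natr1 mulrDl mul1r eadd // ?IH //; first ring.
  by apply: mulr_ge0.
have key h N : 0 <= h <= d -> (0 < N)%N -> `|e h| <= M' / N%:R.
  move=> /andP[h0 hd] N0.
  have N0' : (0 : R) < N%:R by rewrite ltr0n.
  set q := d / N%:R.
  have q0 : 0 < q by apply: divr_gt0.
  have Nq : N%:R * q = d by rewrite /q mulrC divfK // gt_eqF.
  have eq0 : e q = 0.
    have := emul N q (ltW q0); rewrite Nq => /(_ (lexx _)).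
    rewrite ed => /esym /eqP; rewrite mulf_eq0 (gt_eqF N0') /= => /eqP //.
  have hq0 : 0 <= h / q by apply: divr_ge0 => //; apply: ltW.
  have /andP[k1 k2] := truncn_itv hq0.
  set k := Num.trunc (h / q) in k1 k2.
  have kq1 : k%:R * q <= h by rewrite -ler_pdivlMr.
  have kq2 : h < k.+1%:R * q by rewrite -ltr_pdivrMr.
  set r := h - k%:R * q.
  have r0 : 0 <= r by rewrite /r subr_ge0.
  have rq : r < q by move: kq2; rewrite -natr1 mulrDl mul1r /r; lra.
  have kq0 : 0 <= k%:R * q by apply: mulr_ge0 => //; apply: ltW.
  have ehr : e h = e r.
    have -> : h = k%:R * q + r by rewrite /r; ring.
    rewrite eadd // ?emul // ?eq0 ?mulr0 ?add0r //; try lra.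
    rewrite /r; lra.
  have Nr : N%:R * r <= d.
    rewrite -Nq; apply: ltW; rewrite ltr_pM2l //.
  have := eb (N%:R * r); rewrite emul //.
  rewrite normrM (ger0_norm (ltW N0')) ehr => H.
  by rewrite ler_pdivlMr // mulrC; apply: H; rewrite Nr mulr_ge0 // ltW.
have ez h : 0 <= h <= d -> e h = 0.
  move=> hh; apply/eqP; rewrite -normr_eq0; apply/negPn/negP => enz.
  have ep : 0 < `|e h| by rewrite lt_def enz normr_ge0.
  have M'0 : 0 <= M' by apply: le_trans (eb h hh).
  have hq0 : 0 <= M' / `|e h| by apply: divr_ge0 => //; apply: ltW.
  have /andP[_ k2] := truncn_itv hq0.
  set k := Num.trunc (M' / `|e h|) in k2.
  have := key h k.+1 hh isT.
  rewrite ler_pdivlMr ?ltr0n // => H.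
  move: k2; rewrite ltr_pdivrMr // => H2.
  have : `|e h| * k.+1%:R < `|e h| * k.+1%:R.
    by apply: le_lt_trans H _; rewrite mulrC.
  by rewrite ltxx.
move=> h hh; have := ez h hh; rewrite /e; lra.
Qed.
Lemma right_ex (R : realType) (P : R -> Prop) :
  (\forall h \near 0^'+, P h) -> exists2 d : R, 0 < d & forall h, 0 < h <= d -> P h.
Proof.
rewrite near_withinE => /nbhs_normP [e /= e0 He].
exists (e / 2); first by lra.
move=> h /andP[h0 hd]; apply: He => //=.
rewrite sub0r normrN ger0_norm; lra.
Qed.

Lemma near0_ex (R : realType) (P : R -> Prop) :
  (\forall y \near (0:R), P y) -> exists2 e : R, 0 < e & forall y, `|y| < e -> P y.
Proof.
move=> /nbhs_normP [e /= e0 He]; exists e => // y hy; apply: He => /=.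
by rewrite sub0r normrN.
Qed.

Lemma cplx_eta (R : realType) (z : R[i]) : z = complex.Re z +i* complex.Im z.
Proof. by case: z. Qed.

Lemma lt_norm_sub (R : realType) (p e : R[i]) : p \is Num.real -> `|1 - p| < e -> 1 - e < p.
Proof.
move=> pr h.
have : 1 - p < e.
  apply: (le_lt_trans _ h); apply: real_ler_norm; apply: rpredB => //; exact: real1.
by rewrite ltrBlDr -ltrBlDl.
Qed.

Lemma dual_unit (R : realType) (X : completeNormedModType R[i]) (phi : X -> R[i]) (x : X) :
  dual_to x phi -> `|x| = 1 ->
  [/\ phi x = 1, forall y, `|phi y| <= `|y| &
      forall (a : R[i]) (u v : X), phi (a *: u + v) = a * phi u + phi v].
Proof.
move=> [[lin _] [c [[c0 [cb _]] [e1 [e2 e3]]]]] x1.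
rewrite x1 mulr1 in e1 e2; rewrite x1 expr1n in e3.
have c1 : c = 1 by rewrite e2 e3.
split; [by rewrite e1 c1| |exact: lin].
by move=> y; rewrite -[`|y|]mul1r -c1.
Qed.

Lemma sc_step (R : realType) (X : completeNormedModType R[i]) (x a : X) :
  strictly_convex X -> `|x| = 1 -> `|a| = 1 ->
  (forall eps : R, 0 < eps -> exists b : R[i], `|b| = 1 /\ 2 - eps <= complex.Re `|x + b *: a|) ->
  exists g : R[i], a = g *: x.
Proof.
move=> SC x1 a1 H.
have [b [b1 hb]] := @evt_phase _ _ x a a1 H.
have ba1 : `|b *: a| = 1 by rewrite normrZ b1 a1 mulr1.
have bn0 : b != 0 by rewrite -normr_eq0 b1 oner_eq0.
case: (SC x (b *: a) x1 ba1) => [->|].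
- by exists b^-1; rewrite scalerA mulVf // scale1r.
- have E2 : (2 : R[i]) = (2:R)%:C by rewrite rmorph_nat.
  by rewrite normR E2 ltcR ltNge hb.
Qed.

Lemma Re_norm_ge0 (R : realType) (X : normedModType R[i]) (y : X) : 0 <= complex.Re `|y|.
Proof. by have := normr_ge0 y; rewrite normR -[0 : R[i]]/((0:R)%:C) lecR. Qed.

Lemma c0E (R : realType) : (0 : R[i]) = (0:R)%:C.
Proof. by rewrite rmorph0. Qed.

Lemma c1E (R : realType) : (1 : R[i]) = (1:R)%:C.
Proof. by rewrite rmorph1. Qed.

Theorem theorem3 (R : realType) (X : completeNormedModType R[i])
  (J : X -> X -> R[i]) (T : R -> X -> X) (x : X) :
  strictly_convex X -> duality_section J -> `|x| = 1 ->
  C0_contraction_semigroup T ->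
  `|J x (T t x)| @[t --> +oo] --> (1 : R[i]) ->
  generator_domain T x /\ exists lambda : R, generator T x ((lambda%:C * 'i) *: x).
Proof.
move=> SC DJ x1 [Tlin T0 Tsg Tc Tcon] Hlim.
have [phix phib philin] := @dual_unit _ _ (J x) x (DJ x) x1.
move: phix phib philin Hlim; set phi := J x => phix phib philin Hlim.
have phi0 : phi 0 = 0.
  have := philin 1 0 0; rewrite scale1r addr0 mul1r => /eqP.
  by rewrite -subr_eq subrr eq_sym => /eqP.
have phiZ a u : phi (a *: u) = a * phi u by rewrite -[a *: u]addr0 philin phi0 addr0.
have phiD u v : phi (u + v) = phi u + phi v by have := philin 1 u v; rewrite scale1r mul1r.
have phiB u v : phi (u - v) = phi u - phi v.
  by rewrite -scaleN1r phiD phiZ mulN1r.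
have Tz t : 0 <= t -> T t 0 = 0.
  move=> t0; have := Tlin t t0 (-1) 0 0.
  by rewrite scaler0 addr0 scaleN1r addNr.
have TZ t a u : 0 <= t -> T t (a *: u) = a *: T t u.
  by move=> t0; rewrite -[a *: u]addr0 Tlin // Tz // addr0.
have TD t u v : 0 <= t -> T t (u + v) = T t u + T t v.
  by move=> t0; have := Tlin t t0 1 u v; rewrite !scale1r.
have phiT t y : 0 <= t -> `|phi (T t y)| <= `|y|.
  by move=> t0; apply: le_trans (phib _) (Tcon t t0 y).
have Tn1 t : 0 <= t -> `|T t x| = 1.
  move=> t0.
  have le1 : `|T t x| <= 1 by rewrite -x1; exact: Tcon.
  apply/eqP; rewrite eq_le le1 /=.
  rewrite real_leNgt ?real1 ?normr_real //; apply/negP => lt1.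
  move: le1 lt1; set q := `|T t x| => le1 lt1.
  have Hq s : t <= s -> `|phi (T s x)| <= q.
    move=> ts; have s0 : 0 <= s - t by rewrite subr_ge0.
    have -> : T s x = T (s - t) (T t x) by rewrite -Tsg // subrK.
    exact: phiT.
  have q1 : 0 < 1 - q by rewrite subr_gt0.
  have [s ts Hs] := pinfty_ex_ge (num_real t) (cvgr_dist_lt _ _ Hlim _ q1).
  have := @lt_norm_sub _ _ _ (normr_real _) Hs.
  rewrite opprB addrC subrK => /lt_le_trans /(_ (Hq s ts)).
  by rewrite ltxx.
have Tx s : 0 <= s -> exists g, T s x = g *: x.
  move=> s0; apply: (@sc_step _ _ x (T s x) SC x1 (Tn1 s s0)) => eps e0.
  case: (lerP 2 eps) => [e2|e2].
    exists 1; split; first exact: normr1.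
    by apply: le_trans (@Re_norm_ge0 _ _ _); lra.
  have e20 : (0 : R[i]) < (eps/2)%:C by rewrite -[0 : R[i]]/((0:R)%:C) ltcR; lra.
  case: (cvgr_dist_lt _ _ Hlim _ e20) => M [Mr HM].
  have m1 : M <= Num.max M 0 by rewrite le_max lexx.
  have m0 : 0 <= Num.max M 0 by rewrite le_max lexx orbT.
  set t := Num.max M 0 + 1.
  have tM : M < t by rewrite /t; lra.
  have t0 : 0 <= t by rewrite /t; lra.
  have tsM : M < t + s by rewrite /t; lra.
  set z1 := phi (T t x); set z2 := phi (T t (T s x)).
  have h1 := @lt_norm_sub _ _ _ (normr_real _) (HM t tM).
  have h2 : 1 - (eps/2)%:C < `|z2|.
    by rewrite /z2 -Tsg //; exact: (@lt_norm_sub _ _ _ (normr_real _) (HM _ tsM)).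
  rewrite -/z1 normR c1E -rmorphB ltcR in h1.
  rewrite normR c1E -rmorphB ltcR in h2.
  set n1 := complex.Re `|z1| in h1; set n2 := complex.Re `|z2| in h2.
  have N1 : `|z1| = n1%:C by rewrite normR.
  have N2 : `|z2| = n2%:C by rewrite normR.
  have n1z : `|z1| != 0 by rewrite N1 (inj_eq (@complexI R)); apply/eqP; lra.
  have n2z : `|z2| != 0 by rewrite N2 (inj_eq (@complexI R)); apply/eqP; lra.
  have z1z : z1 != 0 by rewrite -normr_eq0.
  pose b := z1 * Num.conj z2 / (`|z1| * `|z2|).
  have b1 : `|b| = 1.
    by rewrite /b normrM normfV !normrM norm_conjC !normr_id mulfV // mulf_neq0.
  have key : phi (T t (x + b *: T s x)) = z1 + b * z2 by rewrite TD // TZ // phiD phiZ.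
  have key2 : z1 + b * z2 = z1 * (`|z1| + `|z2|) / `|z1|.
    have -> : z1 + b * z2 = z1 + z1 * (z2 * Num.conj z2) / (`|z1| * `|z2|).
      by rewrite /b; field; apply/andP; split; [exact: n2z|exact: n1z].
    by rewrite -normCK; field; apply/andP; split; [exact: n1z|exact: n2z].
  have key3 : `|z1| + `|z2| <= `|x + b *: T s x|.
    have <- : `|z1 + b * z2| = `|z1| + `|z2|.
      rewrite key2 normrM normfV normrM normr_id (ger0_norm (addr_ge0 (normr_ge0 _) (normr_ge0 _))).
      by field.
    by rewrite -key; apply: phiT.
  exists b; split => //.
  rewrite N1 N2 [X in _ <= X]normR -rmorphD lecR in key3.
  lra.
pose c s := phi (T s x).
have cx s : 0 <= s -> T s x = c s *: x.
  by move=> s0; have [g hg] := Tx s s0; rewrite /c hg phiZ phix mulr1.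
have c1 s : 0 <= s -> `|c s| = 1.
  by move=> s0; have := Tn1 s s0; rewrite cx // normrZ x1 mulr1.
have cM s t : 0 <= s -> 0 <= t -> c (s + t) = c s * c t.
  by move=> s0 t0; rewrite {1}/c Tsg // (cx t t0) TZ // phiZ mulrC.
have c0 : c 0 = 1 by rewrite /c T0 phix.
have cr : c h @[h --> 0^'+] --> (1 : R[i]).
  apply/cvgrPdist_lt => e e0.
  near=> h.
  have h0 : 0 < h by near: h; exact: nbhs_right_gt.
  rewrite -phix /c -phiB; apply: (le_lt_trans (phib _)).
  near: h; exact: (cvgr_dist_lt _ _ (Tc x) _ e0).
pose u h := complex.Re (c h); pose v h := complex.Im (c h).
have uv s : 0 <= s -> u s ^+ 2 + v s ^+ 2 = 1 by move=> s0; apply: ReIm_sq; exact: c1.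
have pi0 : (0 : R) < pi := pi_gt0 R.
have asin0 : asin (0:R) = 0.
  by rewrite -{1}sin0 sinK // in_itv /=; apply/andP; split; lra.
have [et et0 Het] : exists2 et : R, 0 < et & forall y, `|y| < et -> `|asin y| < pi / 4.
  apply: near0_ex.
  have ca : {for 0, continuous (@asin R)} by apply: continuous_asin; apply/andP; split; lra.
  have p4 : (0 : R) < pi / 4 by lra.
  have := @cvgr_dist_lt _ _ _ (nbhs (0:R)) (nbhs_filter (0:R)) _ _ ca _ p4.
  by apply: filterS => y; rewrite asin0 sub0r normrN.
pose et' := Num.min et 1.
have et'0 : 0 < et' by rewrite lt_min et0 ltr01.
have et'1 : et' <= 1 by rewrite ge_min lexx orbT.
have et'2 : et' <= et by rewrite ge_min lexx.
have et'C : (0 : R[i]) < et'%:C by rewrite c0E ltcR.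
have [d d0 Hd] := @right_ex R (fun h => `|1 - c h| < et'%:C) (cvgr_dist_lt _ _ cr _ et'C).
have small h : 0 <= h <= d -> `|1 - c h| < et'%:C.
  move=> /andP[h0 hd]; case: (ltgtP h 0) => [hn|hp|->]; first by rewrite ltNge h0 in hn.
    by apply: Hd; rewrite hp hd.
  by rewrite c0 subrr normr0.
have vs h : 0 <= h <= d -> `|v h| < et' /\ 0 < u h.
  move=> hh; have sm := small h hh.
  have EI : complex.Im (1 - c h) = - v h by rewrite /v; case: (c h) => a b /=; rewrite add0r.
  have ER : complex.Re (1 - c h) = 1 - u h by rewrite /u; case: (c h) => a b /=.
  have HI := le_lt_trans (@Im_le_norm _ _) sm.
  have HR := le_lt_trans (@Re_le_norm _ _) sm.
  rewrite ltcR EI normrN in HI; rewrite ltcR ER in HR.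
  split => //.
  move: HR; rewrite ltr_norml; lra.
pose th h := asin (v h).
have vI h : 0 <= h <= d -> v h \in `[-1, 1]%R.
  move=> hh; have [H _] := vs h hh; move: H; rewrite ltr_norml in_itv /= => /andP[? ?].
  apply/andP; split; lra.
have thb h : 0 <= h <= d -> `|th h| < pi / 4.
  by move=> hh; apply: Het; have [H _] := vs h hh; lra.
have sinth h : 0 <= h <= d -> sin (th h) = v h by move=> hh; rewrite /th asinK // vI.
have costh h : 0 <= h <= d -> cos (th h) = u h.
  move=> hh; have [_ up] := vs h hh.
  have : -1 <= v h <= 1 by have := vI h hh; rewrite in_itv.
  move=> vb; rewrite /th cos_asin //.
  have h0 : 0 <= h by case/andP: hh.
  have -> : 1 - v h ^+ 2 = u h ^+ 2 by have := uv h h0; lra.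
  by rewrite sqrtr_sqr gtr0_norm.
have thadd a b : 0 <= a -> 0 <= b -> a + b <= d -> th (a + b) = th a + th b.
  move=> a0 b0 abd.
  have ha : 0 <= a <= d by apply/andP; split; lra.
  have hb : 0 <= b <= d by apply/andP; split; lra.
  have E : v (a + b) = sin (th a + th b).
    by rewrite /v cM // ImM sinD (sinth a ha) (costh a ha) (sinth b hb) (costh b hb) -/(u a) -/(u b) -/(v a) -/(v b); ring.
  rewrite /th E sinK // in_itv /=.
  have := thb a ha; have := thb b hb; rewrite !ltr_norml => /andP[? ?] /andP[? ?].
  apply/andP; split; lra.
have thlin := @additive_lin R th d (pi / 4) d0 thadd (fun h hh => ltW (thb h hh)).
set lam := th d / d in thlin.
have cE h : 0 <= h <= d -> c h = cos (lam * h) +i* sin (lam * h).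
  by move=> hh; rewrite (@cplx_eta _ (c h)) -/(u h) -/(v h) -(costh h hh) -(sinth h hh) thlin.
have GEN : generator T x ((lam%:C * 'i) *: x).
  rewrite /generator.
  have L1 := @quot_lim R _ _ lam (is_derive_cos (0:R)).
  have L2 := @quot_lim R _ _ lam (is_derive_sin (0:R)).
  rewrite sin0 oppr0 mulr0 in L1; rewrite cos0 mulr1 in L2.
  move/cvg_dnbhs_at_right: L1 => L1; move/cvg_dnbhs_at_right: L2 => L2.
  have NE : {near 0^'+, (fun h => ((h^-1)%:C * (c h - 1)) *: x) =1 (fun h => (h^-1)%:C *: (T h x - x))}.
    near=> h.
    have h0 : 0 < h by near: h; exact: nbhs_right_gt.
    by rewrite /= cx ?ltW // -scalerA scalerBl scale1r.
  apply: cvg_trans (near_eq_cvg NE) _.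
  apply: cvgZr_tmp.
  apply/cvgrPdist_lt => e e0.
  have er : e \is Num.real by apply: gtr0_real.
  have eE : e = (complex.Re e)%:C by rewrite RRe_real.
  have e'0 : 0 < complex.Re e / 2 by move: e0; rewrite eE c0E ltcR; lra.
  near=> h.
  have h0 : 0 < h by near: h; exact: nbhs_right_gt.
  have hd : h <= d by near: h; exact: nbhs_right_le.
  have A : `|0 - h^-1 * (cos (lam * h) - cos 0)| < complex.Re e / 2.
    by near: h; exact: (cvgr_dist_lt _ _ L1 _ e'0).
  have B : `|lam - h^-1 * (sin (lam * h) - sin 0)| < complex.Re e / 2.
    by near: h; exact: (cvgr_dist_lt _ _ L2 _ e'0).
  rewrite cos0 in A; rewrite sin0 subr0 in B.
  have -> : lam%:C * 'i - (h^-1)%:C * (c h - 1) =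
      (0 - h^-1 * (cos (lam * h) - 1)) +i* (lam - h^-1 * sin (lam * h)).
    rewrite cE; last by apply/andP; split; lra.
    by apply/eqP; rewrite eq_complex /=; apply/andP; split; apply/eqP; ring.
  apply: le_lt_trans (@norm_le_ReIm _ _) _.
  by rewrite eE ltcR /=; lra.
split; first by exists ((lam%:C * 'i) *: x).
by exists lam.
Unshelve. all: by end_near.
Qed.
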